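(* Consider the Lazy Trajectory Optimization (LTO) planner on a configuration space $\mathcal{X}$ normalized to $[0,1]^d$, $d\in\mathbb{N}$, which is partitioned into a uniform grid of $K^d$ voxels ($K$ intervals along each axis), with one graph vertex per voxel, and in which two vertices are joined by an edge if the $\ell_\infty$ distance between the centers of their voxels is at most $r$, where $r=i/K$ for some $i\in\{0,1,\dots,K\}$. Then the TO-aware time complexity of LTO, i.e. the number of trajectory-optimization (TO) problems it solves, is $O\big((2i+1)^d K^d\big)$.
   Context: LTO is a graph-search planner (a variant of lazy weighted A* ) over an a priori unknown graph $\mathcal{G}=(V,E)$. Each vertex represents a robot state and each edge a robot trajectory between two vertex states. The true configuration of a vertex is obtained by solving a short-horizon trajectory optimization problem (a mixed-integer convex program) restricted to that vertex's voxel, and the true trajectory of an edge is obtained by solving a trajectory optimization problem restricted to the hypercube of voxels spanned by the two endpoint voxels. LTO solves a TO problem for a vertex or an edge only when it needs it, and reuses the result if the same vertex configuration or the same configuration pair has already been solved, so each vertex and each edge requires at most one TO solve. The ''TO-aware time complexity'' measures running time by the number of TO problems solved. *)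

(* Defs.v *)
From HB Require Import structures.
From mathcomp Require Import all_boot all_order all_algebra.
Set Implicit Arguments. Unset Strict Implicit. Unset Printing Implicit Defensive.
Import Order.TTheory GRing.Theory Num.Theory.
Local Open Scope ring_scope.

(* A voxel of the uniform grid of [0,1]^d with K intervals per axis:
   its integer grid coordinates (k_0,...,k_{d-1}), 0 <= k_j < K.
   Graph vertices are exactly the voxels (one vertex per voxel). *)
Definition voxel (d K : nat) := {ffun 'I_d -> 'I_K}.

Definition center (R : realFieldType) (d K : nat) (v : voxel d K) (j : 'I_d) : R :=
  ((2 * v j).+1)%:R / (2 * K)%:R.

Definition linf_dist (R : realFieldType) (d K : nat) (u v : voxel d K) : R :=
  \big[Num.max/0]_(j < d) `|center R u j - center R v j|.

Definition adjacent (R : realFieldType) (d K : nat) (r : R) (u v : voxel d K) : bool :=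
  (u != v) && (linf_dist R u v <= r).

(* A TO problem solved by LTO is attached either to a vertex or to an edge
   (a pair of endpoint vertices). *)
Definition TO_problem (d K : nat) : Type := (voxel d K + (voxel d K * voxel d K))%type.

(* A (possible) record of the TO problems solved during a run of LTO on the
   graph with radius r: every solved problem belongs to a vertex or to an edge
   of the graph, and thanks to reuse of results each vertex / each edge is
   solved at most once (no duplicates). *)
Definition LTO_TO_trace (R : realFieldType) (d K : nat) (r : R)
    (s : seq (TO_problem d K)) : Prop :=
  uniq s /\
  all (fun p => match p with
                | inl _ => true
                | inr (u, v) => adjacent r u v
                end) s.

Definition TO_complexity (d K : nat) (s : seq (TO_problem d K)) : nat := size s.

(* Main.v *)
Require Import Defs.
From HB Require Import structures.
From mathcomp Require Import all_boot all_order all_algebra zify ring lra.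
Import Order.TTheory GRing.Theory Num.Theory.
Local Open Scope ring_scope.

Lemma adj_bound (R : realFieldType) (d K i : nat) (u v : voxel d K) (j : 'I_d) :
  (0 < K)%N -> adjacent (i%:R / K%:R : R) u v -> (u j <= v j + i)%N && (v j <= u j + i)%N.
Proof.
move=> K0 /andP[_ H].
have Hj : `|center R u j - center R v j| <= i%:R / K%:R.
  apply: le_trans H; rewrite /linf_dist (bigD1 j) //= le_max lexx //.
have Kp : (0 : R) < K%:R by rewrite ltr0n.
have E : center R u j - center R v j = ((u j)%:R - (v j)%:R) / K%:R.
  have C : forall a : nat, ((2 * a).+1)%:R / (2 * K)%:R = ((2:R) * a%:R + 1) / (2 * K%:R) :> R.
    by move=> a; rewrite -addn1 natrD !natrM.
  rewrite /center !C.
  have K0' : (K%:R : R) != 0 by rewrite pnatr_eq0 -lt0n.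
  field; exact: K0'.
move: Hj; rewrite E normrM (@ger0_norm _ (K%:R^-1)) ?invr_ge0 ?ler0n // ler_pM2r ?invr_gt0 //.
rewrite ler_norml => /andP[H1 H2].
apply/andP; split; rewrite -(ler_nat R) natrD.
  by rewrite -lerBlDl.
by move: H1 H2; rewrite -mulNrn; lra.
Qed.

Definition nbcode (d K i : nat) (u v : voxel d K) : {ffun 'I_d -> 'I_(2 * i).+1} :=
  [ffun j => inord (v j + i - u j)].

Lemma card_adj (R : realFieldType) (d K i : nat) : (0 < K)%N ->
  (#|[set p : voxel d K * voxel d K | adjacent (i%:R / K%:R : R) p.1 p.2]|
     <= K ^ d * (2 * i + 1) ^ d)%N.
Proof.
move=> K0.
set A := [set p | _].
pose g (p : voxel d K * voxel d K) := (p.1, @nbcode d K i p.1 p.2).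
have inj : {in A &, injective g}.
  move=> [u v] [u' v']; rewrite !inE /= => Ha Ha' [eu ec]; subst u'.
  congr (_, _); apply/ffunP => j; apply: val_inj => /=.
  have := congr1 (fun f : {ffun 'I_d -> 'I_(2 * i).+1} => nat_of_ord (f j)) ec; rewrite /nbcode !ffunE /=.
  have /andP[h1 h2] := @adj_bound R d K i u v j K0 Ha.
  have /andP[h3 h4] := @adj_bound R d K i u v' j K0 Ha'.
  rewrite !inordK; lia.
rewrite -(card_in_imset inj).
apply: leq_trans (max_card _) _.
by rewrite card_prod !card_ffun !card_ord addn1.
Qed.

Theorem theorem1 :
  exists C : nat,
    forall (R : realFieldType) (d K i : nat),
      (0 < K)%N -> (i <= K)%N ->
      forall s : seq (TO_problem d K),
        LTO_TO_trace (i%:R / K%:R : R) s ->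
        (TO_complexity s <= C * (2 * i + 1) ^ d * K ^ d)%N.
Proof.
exists 2%N => R d K i K0 iK s [us als].
pose gl (p : TO_problem d K) := if p is inl u then Some u else None.
pose gr (p : TO_problem d K) := if p is inr e then Some e else None.
have cl : ocancel gl inl by case.
have cr : ocancel gr inr by case.
have Hs : size s = (size (pmap gl s) + size (pmap gr s))%N.
  rewrite !size_pmap -(count_predC [pred x | isSome (gl x)] s); congr (_ + _)%N.
  by apply: eq_count; case.
have H1 : (size (pmap gl s) <= K ^ d)%N.
  rewrite -(card_uniqP (pmap_uniq cl us)).
  by apply: leq_trans (max_card _) _; rewrite card_ffun !card_ord.
have H2 : (size (pmap gr s) <= K ^ d * (2 * i + 1) ^ d)%N.
  rewrite -(card_uniqP (pmap_uniq cr us)).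
  apply: leq_trans _ (card_adj R d K i K0).
  apply: subset_leq_card; apply/subsetP => e; rewrite mem_pmap => /mapP[p ps ep].
  rewrite inE; move/allP: als => /(_ p ps); case: p ps ep => //= e' _ [<-].
  by case: e.
rewrite /TO_complexity Hs.
have P : (0 < (2 * i + 1) ^ d)%N by rewrite expn_gt0 addn1.
set a := (K ^ d)%N in H1 H2 *; set b := ((2 * i + 1) ^ d)%N in H2 P *.
nia.
Qed.
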